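(* Let $0\to E_1\to E_2\to E_3\to0$ be an exact sequence of $\mathfrak b_I$-modules (each a direct sum of $\mathfrak t$-weight spaces), and suppose that no weight of $E_1$ is contained in $\Delta_I^+\cup\{0\}$. Then the induced map $E_2^{\mathfrak b_I}\to E_3^{\mathfrak b_I}$ on $\mathfrak b_I$-invariants is an isomorphism.
   Context: $G$ is a connected semisimple algebraic group over $\mathbb C$, $B$ a Borel subgroup, $T\subset B$ a maximal torus with Lie algebra $\mathfrak t$, $\Delta^+$ the positive roots with respect to $B$. $I$ is a set of simple roots, $\Delta_I^+$ the positive roots lying in $\operatorname{Span}_{\mathbb Z}I$, $G_I$ the Levi subgroup containing $T$ of the parabolic subgroup $P_I\supseteq B$ associated to $I$, $B_I=G_I\cap B$, and $\mathfrak b_I=\operatorname{Lie}(B_I)=\mathfrak t\oplus\bigoplus_{\alpha\in\Delta_I^+}\mathfrak g^\alpha$. *)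

(* Defs.v *)
From HB Require Import structures.
From mathcomp Require Import all_boot all_order all_algebra.
From mathcomp Require Import reals.
From mathcomp Require Export complex.

Set Implicit Arguments.
Unset Strict Implicit.
Unset Printing Implicit Defensive.

Import Order.TTheory GRing.Theory Num.Theory.
Local Open Scope ring_scope.

Section LieDefs.
Variable K : fieldType.
Variable L : vectType K.
Variable br : L -> L -> L.

Definition is_lie_bracket : Prop :=
  [/\ (forall a x y z, br (a *: x + y) z = a *: br x z + br y z),
      (forall a x y z, br z (a *: x + y) = a *: br z x + br z y),
      (forall x, br x x = 0) &
      (forall x y z, br x (br y z) + br y (br z x) + br z (br x y) = 0)].

Definition lie_subalgebra (U : {vspace L}) : Prop :=
  forall x y, x \in U -> y \in U -> br x y \in U.

Definition lie_ideal (U : {vspace L}) : Prop :=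
  forall x y, y \in U -> br x y \in U.

Definition derived (U : {vspace L}) : {vspace L} :=
  <<[seq br x y | x <- vbasis U, y <- vbasis U]>>%VS.

Definition lie_solvable (U : {vspace L}) : Prop :=
  exists n, iter n derived U = 0%VS.

Definition lie_semisimple : Prop :=
  forall U, lie_ideal U -> lie_solvable U -> U = 0%VS.

Definition eigvec (f : L -> L) (x : L) : Prop := exists c : K, f x = c *: x.

Definition diagonalizable (f : L -> L) : Prop :=
  forall x, exists n (xs : 'I_n -> L),
    (forall i, eigvec f (xs i)) /\ x = \sum_(i < n) xs i.

Definition toral (t : {vspace L}) : Prop :=
  (forall x y, x \in t -> y \in t -> br x y = 0) /\
  (forall h, h \in t -> diagonalizable (br h)).

(* Cartan subalgebra of a semisimple Lie algebra = maximal toral subalgebra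
   (Lie algebra of a maximal torus T) *)
Definition cartan (t : {vspace L}) : Prop :=
  toral t /\ (forall t', toral t' -> (t <= t')%VS -> t' = t).

(* Borel subalgebra: maximal solvable subalgebra (Lie algebra of B) *)
Definition borel (b : {vspace L}) : Prop :=
  lie_subalgebra b /\ lie_solvable b /\
  (forall b', lie_subalgebra b' -> lie_solvable b' -> (b <= b')%VS -> b' = b).

Variable t : {vspace L}.

Definition tfun := subvs_of t -> K.

Definition root_vec (alpha : tfun) (x : L) : Prop :=
  forall h : subvs_of t, br (vsval h) x = alpha h *: x.

Definition is_root (alpha : tfun) : Prop :=
  (exists h, alpha h != 0) /\ (exists x, x != 0 /\ root_vec alpha x).

Definition pos_root (b : {vspace L}) (alpha : tfun) : Prop :=
  is_root alpha /\ (forall x, root_vec alpha x -> x \in b).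

Definition simple_root (b : {vspace L}) (alpha : tfun) : Prop :=
  pos_root b alpha /\
  ~ (exists beta gamma, pos_root b beta /\ pos_root b gamma /\
       forall h, alpha h = beta h + gamma h).

Definition in_Zspan (I : tfun -> Prop) (alpha : tfun) : Prop :=
  exists n (z : 'I_n -> int) (beta : 'I_n -> tfun),
    (forall i, I (beta i)) /\
    (forall h, alpha h = \sum_(i < n) (z i)%:~R * beta i h).

Definition pos_root_I (b : {vspace L}) (I : tfun -> Prop) (alpha : tfun) : Prop :=
  pos_root b alpha /\ in_Zspan I alpha.

(* b_I = t (+) sum_{alpha in Delta_I^+} g^alpha, as a predicate on L *)
Definition in_bI (b : {vspace L}) (I : tfun -> Prop) (x : L) : Prop :=
  exists (h0 : L) n (xs : 'I_n -> L),
    h0 \in t /\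
    (forall i, exists alpha, pos_root_I b I alpha /\ root_vec alpha (xs i)) /\
    x = h0 + \sum_(i < n) xs i.

Section Modules.
Variables (b : {vspace L}) (I : tfun -> Prop).

Definition is_bI_module (E : lmodType K) (rho : L -> E -> E) : Prop :=
  [/\ (forall x, in_bI b I x -> forall a u v, rho x (a *: u + v) = a *: rho x u + rho x v),
      (forall x y, in_bI b I x -> in_bI b I y -> forall a v,
          rho (a *: x + y) v = a *: rho x v + rho y v) &
      (forall x y, in_bI b I x -> in_bI b I y -> forall v,
          rho (br x y) v = rho x (rho y v) - rho y (rho x v))].

Definition wt_vec (E : lmodType K) (rho : L -> E -> E) (lam : tfun) (v : E) : Prop :=
  forall h : subvs_of t, rho (vsval h) v = lam h *: v.

Definition is_weight (E : lmodType K) (rho : L -> E -> E) (lam : tfun) : Prop :=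
  exists v, v != 0 /\ wt_vec rho lam v.

Definition weight_decomposable (E : lmodType K) (rho : L -> E -> E) : Prop :=
  forall v, exists n (vs : 'I_n -> E) (lams : 'I_n -> tfun),
    (forall i, wt_vec rho (lams i) (vs i)) /\ v = \sum_(i < n) vs i.

Definition is_bI_hom (E F : lmodType K) (rhoE : L -> E -> E) (rhoF : L -> F -> F)
    (f : E -> F) : Prop :=
  (forall a u v, f (a *: u + v) = a *: f u + f v) /\
  (forall x, in_bI b I x -> forall v, f (rhoE x v) = rhoF x (f v)).

Definition bI_invariant (E : lmodType K) (rho : L -> E -> E) (v : E) : Prop :=
  forall x, in_bI b I x -> rho x v = 0.

End Modules.
End LieDefs.

(* Main.v *)
Require Import Defs.
From HB Require Import structures.
From mathcomp Require Import all_boot all_order all_algebra.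
From mathcomp Require Import reals.
From mathcomp Require Import complex.
From Stdlib Require Import Classical ClassicalEpsilon.
Import GRing.Theory.
Local Open Scope ring_scope.

Section Helpers.
Variables (K : fieldType) (L : vectType K) (br : L -> L -> L) (t b : {vspace L})
  (I : tfun t -> Prop).

Lemma in_bI_t h : h \in t -> in_bI br b I h.
Proof. move=> Hh; exists h, 0%N, (fun _ => 0); split=> //; split; [by case|by rewrite big_ord0 addr0]. Qed.

Lemma in_bI_sv (h : subvs_of t) : in_bI br b I (vsval h).
Proof. exact/in_bI_t/subvsP. Qed.

Lemma in_bI0 : in_bI br b I 0.
Proof. exact/in_bI_t/mem0v. Qed.

Lemma in_bI_root alpha e : pos_root_I br b I alpha -> root_vec br alpha e -> in_bI br b I e.
Proof.
move=> Ha He; exists 0, 1%N, (fun _ => e); split; first exact: mem0v.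
split; first by move=> _; exists alpha.
by rewrite big_ord1 add0r.
Qed.

Lemma dbl_eq0 (E : zmodType) (x : E) : x = x + x -> x = 0.
Proof. by move=> H; have := addrK x x; rewrite -H subrr. Qed.

Variables (E : lmodType K) (rho : L -> E -> E).
Hypothesis Hm : is_bI_module br b I rho.

Lemma rhoD x u v : in_bI br b I x -> rho x (u + v) = rho x u + rho x v.
Proof. by case: Hm => H1 _ _ Hx; rewrite -{1}(scale1r u) H1 // scale1r. Qed.

Lemma rho0 x : in_bI br b I x -> rho x 0 = 0.
Proof. by move=> Hx; apply: (@dbl_eq0 E); rewrite -rhoD // addr0. Qed.

Lemma rhoZ x a v : in_bI br b I x -> rho x (a *: v) = a *: rho x v.
Proof. by case: Hm => H1 _ _ Hx; rewrite -(addr0 (a *: v)) H1 // rho0 // addr0. Qed.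

Lemma rhoB x u v : in_bI br b I x -> rho x (u - v) = rho x u - rho x v.
Proof. by move=> Hx; rewrite rhoD // -scaleN1r rhoZ // scaleN1r. Qed.

Lemma rho_sum x n (F : 'I_n -> E) : in_bI br b I x ->
  rho x (\sum_(i < n) F i) = \sum_(i < n) rho x (F i).
Proof.
move=> Hx; apply: (big_ind2 (fun a c => rho x a = c)) => [|a1 c1 a2 c2 <- <-|//].
  exact: rho0.
by rewrite rhoD.
Qed.

Lemma rho_at0 v : rho 0 v = 0.
Proof.
case: Hm => _ H2 _; apply: (@dbl_eq0 E).
by have := H2 0 0 in_bI0 in_bI0 1 v; rewrite scale1r addr0 scale1r.
Qed.

Lemma rhoxZ a e v : in_bI br b I e -> rho (a *: e) v = a *: rho e v.
Proof.
case: Hm => _ H2 _ He; have := H2 e 0 He in_bI0 a v.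
by rewrite addr0 rho_at0 addr0.
Qed.

Lemma rhoxD x y v : in_bI br b I x -> in_bI br b I y -> rho (x + y) v = rho x v + rho y v.
Proof. by case: Hm => _ H2 _ Hx Hy; rewrite -{1}(scale1r x) H2 // scale1r. Qed.

Lemma wtD lam u v : wt_vec (t:=t) rho lam u -> wt_vec (t:=t) rho lam v -> wt_vec (t:=t) rho lam (u + v).
Proof. by move=> Hu Hv h; rewrite (rhoD _ _ _ (in_bI_sv _)) Hu Hv scalerDr. Qed.

Lemma wtZ lam a v : wt_vec (t:=t) rho lam v -> wt_vec (t:=t) rho lam (a *: v).
Proof. by move=> Hv h; rewrite (rhoZ _ _ _ (in_bI_sv _)) Hv !scalerA mulrC. Qed.

Lemma wt0 lam : wt_vec (t:=t) rho lam 0.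
Proof. by move=> h; rewrite (rho0 _ (in_bI_sv _)) scaler0. Qed.

Lemma wtB lam u v : wt_vec (t:=t) rho lam u -> wt_vec (t:=t) rho lam v -> wt_vec (t:=t) rho lam (u - v).
Proof. by move=> Hu Hv; apply: wtD => //; rewrite -scaleN1r; apply: wtZ. Qed.

Lemma wt_sum lam n (F : 'I_n -> E) : (forall i, wt_vec (t:=t) rho lam (F i)) ->
  wt_vec (t:=t) rho lam (\sum_(i < n) F i).
Proof.
by move=> H; elim/big_rec: _ => [|i y _ Hy]; [apply: wt0 | apply: wtD].
Qed.

Lemma wt_indep mu n (vs : 'I_n -> E) lams :
  (forall i, wt_vec (t:=t) rho (lams i) (vs i)) ->
  (forall i, (exists h, lams i h != mu h) \/ vs i = 0) ->
  wt_vec (t:=t) rho mu (\sum_(i < n) vs i) -> \sum_(i < n) vs i = 0.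
Proof.
elim: n vs lams => [|n IH] vs lams Hw Hd Hs; first by rewrite big_ord0.
move: Hs; rewrite big_ord_recl => Hs.
case: (Hd ord0) => [[h Hh]|H0].
  set c := lams ord0 h.
  pose ws i := (lams (lift ord0 i) h - c) *: vs (lift ord0 i).
  have Hws : (mu h - c) *: (vs ord0 + \sum_(i < n) vs (lift ord0 i)) = \sum_(i < n) ws i.
    rewrite scalerBl -Hs (rhoD _ _ _ (in_bI_sv _)) (rho_sum _ _ _ (in_bI_sv _)) Hw -/c scalerDr.
    rewrite opprD addrACA subrr add0r scaler_sumr -sumrB.
    by apply: eq_bigr => i _; rewrite Hw /ws scalerBl.
  have Hz : \sum_(i < n) ws i = 0.
    apply: (IH ws (fun i => lams (lift ord0 i))).
    - by move=> i; apply: wtZ.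
    - move=> i; case: (Hd (lift ord0 i)) => [Hi|Hi]; first by left.
      by right; rewrite /ws Hi scaler0.
    - by rewrite -Hws; apply: wtZ.
  move: Hws; rewrite Hz => /eqP; rewrite scaler_eq0 subr_eq0 eq_sym (negbTE Hh) /=.
  by move/eqP.
rewrite H0 add0r; apply: (IH _ (fun i => lams (lift ord0 i))) => //.
by move: Hs; rewrite H0 add0r.
Qed.

Lemma inv_gen v : (forall h, h \in t -> rho h v = 0) ->
  (forall alpha e, pos_root_I br b I alpha -> root_vec br alpha e -> rho e v = 0) ->
  bI_invariant br b I rho v.
Proof.
move=> Ht Hr x [h0 [n [xs [Hh0 [Hxs ->]]]]].
elim: n xs Hxs => [|n IH] xs Hxs; first by rewrite big_ord0 addr0 Ht.
have [al [Hal Hx]] := Hxs ord_max.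
rewrite big_ord_recr addrA rhoxD.
- by rewrite IH ?(Hr al (xs ord_max)) ?addr0 // => i; apply: Hxs.
- exists h0, n, (fun i => xs (widen_ord (leqnSn n) i)); split=> //; split=> // i; exact: Hxs.
- exact: in_bI_root Hal Hx.
Qed.

End Helpers.

Section Homs.
Variables (K : fieldType) (E F : lmodType K) (f : E -> F).
Hypothesis Hl : forall a u v, f (a *: u + v) = a *: f u + f v.
Lemma fD u v : f (u + v) = f u + f v.
Proof. by rewrite -{1}(scale1r u) Hl scale1r. Qed.
Lemma f0 : f 0 = 0.
Proof. by apply: dbl_eq0; rewrite -fD addr0. Qed.
Lemma fZ a u : f (a *: u) = a *: f u.
Proof. by rewrite -(addr0 (a *: u)) Hl f0 addr0. Qed.
Lemma fB u v : f (u - v) = f u - f v.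
Proof. by rewrite fD -scaleN1r fZ scaleN1r. Qed.
Lemma f_sum n (G : 'I_n -> E) : f (\sum_(i < n) G i) = \sum_(i < n) f (G i).
Proof.
apply: (big_ind2 (fun a c => f a = c)) => [|a1 c1 a2 c2 <- <-|//].
  exact: f0.
exact: fD.
Qed.
End Homs.


Arguments in_bI_sv {K L br t b I} h.
Arguments in_bI_t {K L br t b I} h.
Arguments in_bI0 {K L br t b I}.
Arguments in_bI_root {K L br t b I} alpha e.
Arguments rhoD {K L br t b I E rho} Hm x u v.
Arguments rho0 {K L br t b I E rho} Hm x.
Arguments rhoZ {K L br t b I E rho} Hm x a v.
Arguments rhoB {K L br t b I E rho} Hm x u v.
Arguments rho_sum {K L br t b I E rho} Hm x n F.
Arguments rho_at0 {K L br t b I E rho} Hm v.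
Arguments rhoxZ {K L br t b I E rho} Hm a e v.
Arguments rhoxD {K L br t b I E rho} Hm x y v.
Arguments wtD {K L br t b I E rho} Hm lam u v.
Arguments wtZ {K L br t b I E rho} Hm lam a v.
Arguments wt0 {K L br t b I E rho} Hm lam.
Arguments wtB {K L br t b I E rho} Hm lam u v.
Arguments wt_sum {K L br t b I E rho} Hm lam n F.
Arguments wt_indep {K L br t b I E rho} Hm mu n vs lams.
Arguments inv_gen {K L br t b I E rho} Hm v.
Arguments fD {K E F f} Hl u v.
Arguments f0 {K E F f} Hl.
Arguments fZ {K E F f} Hl a u.
Arguments fB {K E F f} Hl u v.
Arguments f_sum {K E F f} Hl n G.
Theorem lemma2p3p2 (R : realType) (L : vectType R[i]) (br : L -> L -> L)
  (t b : {vspace L}) (I : tfun t -> Prop)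
  (E1 E2 E3 : lmodType R[i])
  (rho1 : L -> E1 -> E1) (rho2 : L -> E2 -> E2) (rho3 : L -> E3 -> E3)
  (f : E1 -> E2) (g : E2 -> E3) :
  is_lie_bracket br -> lie_semisimple br ->
  cartan br t -> borel br b -> (t <= b)%VS ->
  (forall alpha, I alpha -> simple_root br b alpha) ->
  is_bI_module br b I rho1 -> is_bI_module br b I rho2 -> is_bI_module br b I rho3 ->
  weight_decomposable t rho1 -> weight_decomposable t rho2 -> weight_decomposable t rho3 ->
  is_bI_hom br b I rho1 rho2 f -> is_bI_hom br b I rho2 rho3 g ->
  injective f -> (forall w, exists v, g v = w) ->
  (forall v, g v = 0 <-> exists u, f u = v) ->
  (forall lam, is_weight rho1 lam ->
     ~ (pos_root_I br b I lam \/ (forall h, lam h = 0))) ->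
  (forall v w, bI_invariant br b I rho2 v -> bI_invariant br b I rho2 w ->
     g v = g w -> v = w) /\
  (forall u, bI_invariant br b I rho3 u ->
     exists v, bI_invariant br b I rho2 v /\ g v = u).
Proof.
move=> _ _ _ _ _ _ Hm1 Hm2 Hm3 _ Hd2 _ [Lf Ef] [Lg Eg] finj gsurj Hex Hwt.
have sv := @in_bI_sv _ _ br t b I.
have f0' := f0 Lf; have fZ' := fZ Lf; have g0' := f0 Lg; have gZ' := fZ Lg.
have gB' := fB Lg; have gD' := fD Lg; have gS := f_sum Lg.
have rB2 := @rhoB _ _ _ _ _ _ _ _ Hm2.
have r02 := @rho0 _ _ _ _ _ _ _ _ Hm2.
split.
  move=> v w Iv Iw Hg.
  have [u Hu] : exists u, f u = v - w by apply/Hex; rewrite gB' Hg subrr.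
  have Iu : forall h : subvs_of t, rho1 (vsval h) u = 0.
    by move=> h; apply: finj; rewrite Ef ?sv // Hu rB2 ?sv // Iv ?Iw ?sv // subrr f0'.
  have u0 : u = 0.
    apply/eqP/negPn/negP => Hnz; apply: (Hwt (fun _ => 0)); last by right.
    by exists u; split=> // hh; rewrite Iu scale0r.
  by apply/eqP; rewrite -subr_eq0 -Hu u0 f0'.
move=> u Iu; have [v Hv] := gsurj u.
have [n [vs [lams [Hw Ev]]]] := Hd2 v; rewrite {}Ev in Hv.
pose P i := forall h, lams i h = 0.
pose v0 := \sum_(i < n) (if excluded_middle_informative (P i) then vs i else 0).
pose r := \sum_(i < n) (if excluded_middle_informative (P i) then 0 else vs i).
have Hsplit : \sum_(i < n) vs i = v0 + r.
  rewrite -big_split; apply: eq_bigr => i _.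
  by destruct (excluded_middle_informative (P i)) => /=; rewrite ?addr0 ?add0r.
have W0 : wt_vec (t:=t) rho2 (fun _ => 0) v0.
  apply: (wt_sum Hm2) => i; destruct (excluded_middle_informative (P i)) as [Pi|nPi].
    by move=> h; rewrite Hw Pi.
  exact: (wt0 Hm2).
have Ww : forall lam x, wt_vec (t:=t) rho2 lam x -> wt_vec (t:=t) rho3 lam (g x).
  by move=> lam x Hx h; rewrite -Eg ?sv // Hx gZ'.
have Iu0 : wt_vec (t:=t) rho3 (fun _ => 0) u by move=> h; rewrite Iu ?sv // scale0r.
have gr : g r = 0.
  have Er : g r = u - g v0 by rewrite -Hv Hsplit gD' addrC addKr.
  rewrite /r gS; apply: (wt_indep Hm3 (fun _ => 0) n _ lams).
  - move=> i; apply: Ww; destruct (excluded_middle_informative (P i)); [exact: (wt0 Hm2) | exact: Hw].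
  - move=> i; destruct (excluded_middle_informative (P i)) as [Pi|Pi]; first by right; rewrite g0'.
    left; have [h Hh] := not_all_ex_not _ _ Pi; exists h; exact/eqP.
  - rewrite -gS -/r Er; apply: (wtB Hm3) => //; exact: Ww.
have gv0 : g v0 = u by rewrite -Hv Hsplit gD' gr addr0.
exists v0; split => //.
apply: (inv_gen Hm2).
  move=> h Hh; have := W0 (vsproj t h); rewrite vsprojK // scale0r => ->; done.
move=> alpha e Ha He.
have Hbe : in_bI br b I e by exact: in_bI_root Ha He.
have Wa : wt_vec (t:=t) rho2 alpha (rho2 e v0).
  move=> h; have [_ _ H3] := Hm2; have := H3 (vsval h) e (sv h) Hbe v0.
  rewrite (W0 h) scale0r r02 // subr0 He (rhoxZ Hm2) // => E.
have [w Hwf] : exists w, f w = rho2 e v0 by apply/Hex; rewrite Eg // gv0 Iu.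
have Ww1 : wt_vec (t:=t) rho1 alpha w.
  by move=> h; apply: finj; rewrite Ef ?sv // Hwf Wa fZ' Hwf.
have w0 : w = 0.
  apply/eqP/negPn/negP => nz; apply: (Hwt alpha); last by left.
  by exists w.
by rewrite -Hwf w0 f0'.
Qed.
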